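(* For any finite family $\{(\sigma_{i,A},\sigma_{i,B})\;\vert\; i\in I\}\subseteq\mathfrak{S}_A\times\mathfrak{S}_B$ and any $(\sigma'_A,\sigma'_B)\in\mathfrak{S}_A\times\mathfrak{S}_B$, $$\Big(\inf^{S_{AB}}_{i\in I}\sigma_{i,A}\otimes\sigma_{i,B}\Big)\sqsubseteq_{S_{AB}}\sigma'_A\otimes\sigma'_B\ \Rightarrow\ \Big(\inf^{\widetilde{S}_{AB}}_{i\in I}\sigma_{i,A}\widetilde{\otimes}\sigma_{i,B}\Big)\sqsubseteq_{\widetilde{S}_{AB}}\sigma'_A\widetilde{\otimes}\sigma'_B.$$
   Context: $\mathfrak{S}_A,\mathfrak{S}_B$ are down-complete Inf semi-lattices with bottom, carriers of States/Effects Chu spaces $(\mathfrak{S}_A,\mathfrak{E}_A,\epsilon^{\mathfrak{S}_A})$, $(\mathfrak{S}_B,\mathfrak{E}_B,\epsilon^{\mathfrak{S}_B})$ with values in $\mathfrak{B}=\{\mathbf{Y},\mathbf{N},\bot\}$ (meet $\wedge$, product $\bullet$ with $x\bullet\mathbf{Y}=x$, $x\bullet\mathbf{N}=\mathbf{N}$, $\bot\bullet\bot=\bot$). $S_{AB}=\mathfrak{S}_A\otimes\mathfrak{S}_B$ is Fraser's canonical tensor product: the Inf semi-lattice generated by elements $\sigma_A\otimes\sigma_B$ subject to $(\sigma_A\sqcap\sigma'_A)\otimes\sigma_B=(\sigma_A\otimes\sigma_B)\sqcap(\sigma'_A\otimes\sigma_B)$ and $\sigma_A\otimes(\sigma_B\sqcap\sigma'_B)=(\sigma_A\otimes\sigma_B)\sqcap(\sigma_A\otimes\sigma'_B)$,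 ordered by $x\sqsubseteq y$ iff $x\sqcap y=x$. $\widetilde{S}_{AB}$ is the minimal tensor product: maps $\inf^{\widetilde{S}_{AB}}_{i\in I}\sigma_{i,A}\widetilde{\otimes}\sigma_{i,B}:(\mathfrak{l}_A,\mathfrak{l}_B)\mapsto\bigwedge_{i\in I}\epsilon^{\mathfrak{S}_A}_{\mathfrak{l}_A}(\sigma_{i,A})\bullet\epsilon^{\mathfrak{S}_B}_{\mathfrak{l}_B}(\sigma_{i,B})$ on $\mathfrak{E}_A\times\mathfrak{E}_B$, ordered pointwise. *)

(* Defs.v *)
From HB Require Import structures.
From mathcomp Require Import all_boot all_order.
Set Implicit Arguments. Unset Strict Implicit. Unset Printing Implicit Defensive.
Import Order.TTheory.
Local Open Scope order_scope.

Inductive B3 : Type := BY | BN | Bbot.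

Definition bmeet (x y : B3) : B3 :=
  match x, y with
  | BY, BY => BY
  | BN, BN => BN
  | _, _ => Bbot
  end.

Definition bprod (x y : B3) : B3 :=
  match x, y with
  | _, BY => x
  | _, BN => BN
  | BY, Bbot => Bbot
  | BN, Bbot => BN
  | Bbot, Bbot => Bbot
  end.

Definition ble (x y : B3) : Prop := bmeet x y = x.

Definition down_complete (d : Order.disp_t) (S : bMeetSemilatticeType d) : Prop :=
  forall X : S -> Prop,
    (exists x, X x) ->
    (forall x y, X x -> X y -> exists z, X z /\ z <= x /\ z <= y) ->
    exists m : S, (forall x, X x -> m <= x) /\
                  (forall m', (forall x, X x -> m' <= x) -> m' <= m).

(* States/Effects Chu space with carrier S of states, effects E and
   evaluation eps : E -> S -> B3; the evaluation maps eps_l are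
   Inf-semilattice morphisms (preserve binary meets). *)
Record ChuSpace (d : Order.disp_t) (S : bMeetSemilatticeType d) := {
  effects : Type;
  eval : effects -> S -> B3;
  eval_meet : forall l (s s' : S), eval l (s `&` s') = bmeet (eval l s) (eval l s')
}.

(* Formal finite infima of pure tensors a (x) b are represented by
   (nonempty) sequences of pairs; concatenation is the formal meet.
   teq is the congruence generated by the semilattice laws (formal meets are
   sets of generators) and the two bilinearity relations. *)
Section Fraser.
Variables (dA dB : Order.disp_t) (SA : bMeetSemilatticeType dA)
          (SB : bMeetSemilatticeType dB).

Inductive teq : seq (SA * SB) -> seq (SA * SB) -> Prop :=
  | teq_refl s : teq s s
  | teq_sym s t : teq s t -> teq t s
  | teq_trans s t u : teq s t -> teq t u -> teq s u
  | teq_set s t : {subset s <= t} -> {subset t <= s} -> teq s t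
  | teq_cat s s' t : teq s s' -> teq (s ++ t) (s' ++ t)
  | teq_linA (a a' : SA) (b : SB) : teq [:: (a `&` a', b)] [:: (a, b); (a', b)]
  | teq_linB (a : SA) (b b' : SB) : teq [:: (a, b `&` b')] [:: (a, b); (a, b')].

Definition tle (x y : seq (SA * SB)) : Prop := teq (x ++ y) x.

Variables (CA : ChuSpace SA) (CB : ChuSpace SB).

Definition tpure (p : SA * SB) : effects CA -> effects CB -> B3 :=
  fun la lb => bprod (eval la p.1) (eval lb p.2).

Definition tinf (s : seq (SA * SB)) : effects CA -> effects CB -> B3 :=
  match s with
  | [::] => fun _ _ => BY (* never used: families are nonempty *)
  | p :: s' => fun la lb => foldr (fun q acc => bmeet (tpure q la lb) acc)
                                  (tpure p la lb) s'
  end.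

Definition tile (f g : effects CA -> effects CB -> B3) : Prop :=
  forall la lb, ble (f la lb) (g la lb).

End Fraser.

(* Main.v *)
Require Import Defs.
From mathcomp Require Import all_boot all_order.

Definition omeet (x y : option B3) : option B3 :=
  match x, y with
  | None, _ => y
  | _, None => x
  | Some a, Some b => Some (bmeet a b)
  end.

Lemma bmeetC a b : bmeet a b = bmeet b a.
Proof. by case: a; case: b. Qed.
Lemma bmeetA a b c : bmeet a (bmeet b c) = bmeet (bmeet a b) c.
Proof. by case: a; case: b; case: c. Qed.
Lemma omeetC a b : omeet a b = omeet b a.
Proof. by case: a => [a|]; case: b => [b|] //=; rewrite bmeetC. Qed.
Lemma omeetA a b c : omeet a (omeet b c) = omeet (omeet a b) c.
Proof. by case: a => [a|]; case: b => [b|]; case: c => [c|] //=; rewrite bmeetA. Qed.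
Lemma bprod_meetl x x' y : bprod (bmeet x x') y = bmeet (bprod x y) (bprod x' y).
Proof. by case: x; case: x'; case: y. Qed.
Lemma bprod_meetr x y y' : bprod x (bmeet y y') = bmeet (bprod x y) (bprod x y').
Proof. by case: x; case: y; case: y'. Qed.

Definition isY (b : B3) : bool := if b is BY then true else false.
Definition isN (b : B3) : bool := if b is BN then true else false.

Section Val.
Variables (T : Type) (f : T -> B3).

Definition val (s : seq T) : option B3 :=
  foldr (fun q acc => omeet (Some (f q)) acc) None s.

Lemma val_cons x s : val (x :: s) = omeet (Some (f x)) (val s).
Proof. by []. Qed.

Lemma val_cat s t : val (s ++ t) = omeet (val s) (val t).
Proof. by elim: s => [|x s IH] //; rewrite cat_cons !val_cons IH omeetA. Qed.

Definition chr (s : seq T) : option B3 :=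
  if s is [::] then None else
  if all (fun q => isY (f q)) s then Some BY else
  if all (fun q => isN (f q)) s then Some BN else Some Bbot.

Lemma valE s : val s = chr s.
Proof.
elim: s => [|x s IH] //; rewrite val_cons IH /chr.
case: s {IH} => [|y s] /=; first by case: (f x).
case: (f x) => /=;
case: (f y) => /=; case: (all (fun q => isY (f q)) s); case: (all (fun q => isN (f q)) s) => //=.
Qed.
End Val.
Arguments val {T}. Arguments chr {T}.

Lemma chr_eq (T : eqType) (f : T -> B3) (s t : seq T) :
  {subset s <= t} -> {subset t <= s} -> chr f s = chr f t.
Proof.
move=> st ts.
have e : s =i t by move=> x; apply/idP/idP; [apply: st | apply: ts].
rewrite /chr.
case: s st ts e => [|x s]; case: t => [|y t] //.
- by move=> _ ts _; have := ts y; rewrite !inE eqxx => /(_ isT).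
- by move=> st _ _; have := st x; rewrite !inE eqxx => /(_ isT).
- by move=> _ _ e; rewrite !(eq_all_r e).
Qed.

Theorem mainTheorem10
  (dA dB : Order.disp_t) (SA : bMeetSemilatticeType dA) (SB : bMeetSemilatticeType dB)
  (hA : down_complete SA) (hB : down_complete SB)
  (CA : ChuSpace SA) (CB : ChuSpace SB)
  (I : finType) (hI : 0 < #|I|) (sA : I -> SA) (sB : I -> SB)
  (sA' : SA) (sB' : SB) :
  tle [seq (sA i, sB i) | i <- enum I] [:: (sA', sB')] ->
  tile (@tinf _ _ _ _ CA CB [seq (sA i, sB i) | i <- enum I]) (@tpure _ _ _ _ CA CB (sA', sB')).
Proof.
move=> H la lb.
pose f := fun q => @tpure _ _ _ _ CA CB q la lb.
have inv : forall s t, teq s t -> val f s = val f t.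
  move=> s t; elim=> {s t} //.
  - by move=> s t u _ -> _ ->.
  - by move=> s t st ts; rewrite !valE; apply: chr_eq.
  - by move=> s s' t _ e; rewrite !val_cat e.
  - move=> a a' b; rewrite /val /= /f /tpure /= eval_meet bprod_meetl.
    by case: (bprod _ _); case: (bprod _ _).
  - move=> a b b'; rewrite /val /= /f /tpure /= eval_meet bprod_meetr.
    by case: (bprod _ _); case: (bprod _ _).
have {}H := inv _ _ H; rewrite val_cat in H.
move: H; set s := [seq _ | _ <- _].
case: s => [|p s'] //; rewrite val_cons.
have key : forall b, Some (foldr (fun q acc => bmeet (f q) acc) b s') =
                     omeet (Some b) (val f s').
  move=> b; elim: s' => [|q s' IH] //.
  rewrite val_cons omeetA (omeetC (Some b)) -omeetA -IH.
  by [].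
rewrite -!key /ble /=.
change (@tinf _ _ _ _ CA CB (p :: s') la lb) with (foldr (fun q acc => bmeet (f q) acc) (f p) s').
by case.
Qed.
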